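(* Under the setting and assumptions in the context, $$\max_{z\in\{0,1\}}\Pr(Y=1,R=0\mid Z=z)\ \le\ \Pr(Y(0)=1)\ \le\ \min_{z\in\{0,1\}}\Pr(Y=1\mid Z=z),$$ $$\max_{z\in\{0,1\}}\Pr(Y=1\mid Z=z)\ \le\ \Pr(Y(1)=1)\ \le\ 1-\max_{z\in\{0,1\}}\Pr(Y=0,R=1\mid Z=z).$$
   Context: Units are drawn from a population (a probability space). Each unit has a binary assignment $Z\in\{0,1\}$ with $0<\Pr(Z=1)<1$, binary potential recommendations $R(0),R(1)\in\{0,1\}$, and binary potential outcomes $Y(0),Y(1)\in\{0,1\}$ indexed by the recommendation only (exclusion restriction). Observed quantities are $R=R(Z)$ and $Y=Y(R(Z))$. Assumptions: (Randomization) $Z$ is independent of $(R(0),R(1),Y(0),Y(1))$; (Monotonicity) $Y(1)\ge Y(0)$ almost surely. *)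

(* Defs.v *)
From HB Require Import structures.
From mathcomp Require Import all_boot all_order all_algebra.
From mathcomp Require Import all_classical all_reals.
From mathcomp Require Import ereal topology normedtype sequences measure probability.
Set Implicit Arguments. Unset Strict Implicit. Unset Printing Implicit Defensive.
Import Order.TTheory GRing.Theory Num.Theory.
Local Open Scope classical_set_scope.
Local Open Scope ring_scope.

Definition pr d (T : measurableType d) (R : realType)
  (P : probability T R) (A : set T) : R := fine (P A).

Definition condpr d (T : measurableType d) (R : realType)
  (P : probability T R) (A B : set T) : R :=
  pr P (A `&` B) / pr P B.

Definition indep_rv d (T : measurableType d) (R : realType)
  (P : probability T R) (A B : Type) (X : T -> A) (W : T -> B) : Prop :=
  forall (a : A) (b : B),
    P ([set t | X t = a] `&` [set t | W t = b]) =
    (P [set t | X t = a] * P [set t | W t = b])%E.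

Definition obsR (T : Type) (Z R0 R1 : T -> bool) : T -> bool :=
  fun t => if Z t then R1 t else R0 t.
Definition obsY (T : Type) (Z R0 R1 Y0 Y1 : T -> bool) : T -> bool :=
  fun t => if obsR Z R0 R1 t then Y1 t else Y0 t.

(* Main.v *)
Require Import Defs.
From HB Require Import structures.
From mathcomp Require Import all_boot all_order all_algebra.
From mathcomp Require Import all_classical all_reals.
From mathcomp Require Import ereal topology normedtype sequences measure probability.
Import Order.TTheory GRing.Theory Num.Theory.
Local Open Scope classical_set_scope.
Local Open Scope ring_scope.

Lemma prE d (T : measurableType d) (R : realType) (P : probability T R) (A : set T) :
  measurable A -> P A = (pr P A)%:E.
Proof. by move=> mA; rewrite /pr fineK // fin_num_measure. Qed.

Lemma mbool d (T : measurableType d) (f : T -> bool) (b : bool) :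
  measurable [set t | f t] -> measurable [set t | f t = b].
Proof.
move=> mf; case: b => //.
have -> : [set t | f t = false] = ~` [set t | f t].
  by apply/seteqP; split => t /=; case: (f t).
exact: measurableC.
Qed.

Definition T4 := (bool * bool * bool * bool)%type.

Lemma indep_list d (T : measurableType d) (R : realType) (P : probability T R)
  (Z : T -> bool) (W : T -> T4) (z : bool)
  (mZ : measurable [set t | Z t = z])
  (mW : forall x, measurable [set t | W t = x])
  (hrand : indep_rv P Z W) (s : seq T4) : uniq s ->
  measurable [set t | W t \in s] /\
  P ([set t | Z t = z] `&` [set t | W t \in s]) =
  (P [set t | Z t = z] * P [set t | W t \in s])%E.
Proof.
elim: s => [_|x s IH /= /andP[xs us]].
  have -> : [set t | W t \in [::]] = set0 by apply/seteqP; split => t //=.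
  by rewrite setI0 measure0 mule0.
have [ms hs] := IH us.
have E : [set t | W t \in x :: s] = [set t | W t = x] `|` [set t | W t \in s].
  apply/seteqP; split => t /=; rewrite in_cons.
    by case/orP => [/eqP ->|]; [left|right].
  by case => [->|->]; rewrite ?eqxx ?orbT.
have D : [set t | W t = x] `&` [set t | W t \in s] = set0.
  by apply/seteqP; split => t //= [-> h]; rewrite h in xs.
have mU : measurable [set t | W t \in x :: s] by rewrite E; exact: measurableU.
split => //.
rewrite E setIUr measureU //; last 3 first.
- exact: measurableI.
- exact: measurableI.
- by rewrite setIACA setIid D setI0.
transitivity (P [set t | Z t = z] * P [set t | W t = x] +
   P [set t | Z t = z] * P [set t | W t \in s])%E.
  by congr (_ + _); [exact: hrand | exact: hs].
rewrite -muleDr; first by rewrite measureU.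
- exact: fin_num_measure.
- by apply: ge0_adde_def; rewrite inE measure_ge0.
Qed.
From mathcomp Require Import lra.

Lemma indep_pred d (T : measurableType d) (R : realType) (P : probability T R)
  (Z : T -> bool) (W : T -> T4) (z : bool)
  (mZ : measurable [set t | Z t = z])
  (mW : forall x, measurable [set t | W t = x])
  (hrand : indep_rv P Z W) (S : pred T4) :
  measurable [set t | S (W t)] /\
  P ([set t | Z t = z] `&` [set t | S (W t)]) =
  (P [set t | Z t = z] * P [set t | S (W t)])%E.
Proof.
have := @indep_list d T R P Z W z mZ mW hrand [seq x <- enum (@predT T4) | S x].
rewrite filter_uniq ?enum_uniq // => /(_ isT).
have -> // : [set t | W t \in [seq x <- enum (@predT T4) | S x]] = [set t | S (W t)].
by apply/seteqP; split => t /=; rewrite mem_filter mem_enum andbT.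
Qed.

Lemma le_ae d (T : measurableType d) (R : realType) (P : probability T R)
  (N A B : set T) : measurable N -> P N = 0%E -> measurable A -> measurable B ->
  (forall t, A t -> ~ N t -> B t) -> pr P A <= pr P B.
Proof.
move=> mN PN mA mB h.
rewrite -lee_fin -!prE //.
apply: (@le_trans _ _ (P (B `|` N))).
  apply: le_measure; rewrite ?inE //; first exact: measurableU.
  by move=> t At; case: (pselect (N t)) => Nt; [right|left; apply: h].
apply: le_trans (measureU2 _ _ _) _ => //.
suff -> : (P B + P N = P B)%E by [].
by rewrite -[RHS]adde0; congr (_ + _); exact: PN.
Qed.

Lemma pr_mono d (T : measurableType d) (R : realType) (P : probability T R)
  (A B : set T) : measurable A -> measurable B -> A `<=` B -> pr P A <= pr P B.
Proof.
move=> mA mB sAB; rewrite -lee_fin -!prE //.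
by apply: le_measure; rewrite ?inE.
Qed.

Lemma pr_disj d (T : measurableType d) (R : realType) (P : probability T R)
  (A B : set T) : measurable A -> measurable B -> A `&` B = set0 ->
  pr P A + pr P B <= 1.
Proof.
move=> mA mB D; rewrite -lee_fin EFinD -!prE // -measureU //.
by rewrite -(probability_setT P); apply: le_measure; rewrite ?inE //; exact: measurableU.
Qed.

Theorem mainTheorem5 (d : measure_display) (T : measurableType d) (R : realType)
  (P : probability T R) (Z R0 R1 Y0 Y1 : T -> bool)
  (mZ : measurable [set t | Z t]) (mR0 : measurable [set t | R0 t])
  (mR1 : measurable [set t | R1 t]) (mY0 : measurable [set t | Y0 t])
  (mY1 : measurable [set t | Y1 t])
  (hZpos : (0 < P [set t | Z t])%E) (hZlt1 : (P [set t | Z t] < 1)%E)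
  (hrand : indep_rv P Z (fun t => (R0 t, R1 t, Y0 t, Y1 t)))
  (hmono : {ae P, forall t, Y0 t ==> Y1 t}) :
  let Ro := obsR Z R0 R1 in
  let Yo := obsY Z R0 R1 Y0 Y1 in
  let Zis z := [set t | Z t = z] in
  [/\ Num.max (condpr P [set t | Yo t /\ ~~ Ro t] (Zis false))
              (condpr P [set t | Yo t /\ ~~ Ro t] (Zis true))
        <= pr P [set t | Y0 t],
      pr P [set t | Y0 t]
        <= Num.min (condpr P [set t | Yo t] (Zis false))
                   (condpr P [set t | Yo t] (Zis true)),
      Num.max (condpr P [set t | Yo t] (Zis false))
              (condpr P [set t | Yo t] (Zis true))
        <= pr P [set t | Y1 t]
    & pr P [set t | Y1 t]
        <= 1 - Num.max (condpr P [set t | ~~ Yo t /\ Ro t] (Zis false))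
                       (condpr P [set t | ~~ Yo t /\ Ro t] (Zis true))].
Proof.
move=> Ro Yo Zis.
pose W := fun t => (R0 t, R1 t, Y0 t, Y1 t).
have mZz : forall z, measurable (Zis z) by move=> z; exact: mbool.
have mW : forall x, measurable [set t | W t = x].
  case=> [[[a b] c] e].
  have -> : [set t | W t = (a, b, c, e)] = [set t | R0 t = a] `&` [set t | R1 t = b]
     `&` [set t | Y0 t = c] `&` [set t | Y1 t = e].
    apply/seteqP; split => t /=; first by rewrite /W; case=> -> -> -> ->.
    by rewrite /W; case=> [[[-> ->] ->] ->].
  by repeat apply: measurableI; exact: mbool.
have IP := fun z S => @indep_pred d T R P Z W z (mZz z) mW hrand S.
have mS : forall S : pred T4, measurable [set t | S (W t)] by move=> S; case: (IP true S).
have qpos : forall z, 0 < pr P (Zis z).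
  have ET : pr P (Zis true) + pr P (Zis false) = 1.
    apply/eqP; rewrite -(@eqe R) EFinD -!prE // -measureU //.
    + rewrite -(probability_setT P); apply/eqP; congr (P _).
      apply/seteqP; split => t //= _; rewrite /Zis /=; by case: (Z t); [left|right].
    + by apply/seteqP; split => t //=; rewrite /Zis /=; case => ->.
  have h1 : 0 < pr P (Zis true) by rewrite -lte_fin -prE.
  have h2 : pr P (Zis true) < 1 by rewrite -lte_fin -prE.
  by case; lra.
have condE : forall z (A : set T) (S : pred T4),
    A `&` Zis z = [set t | S (W t)] `&` Zis z ->
    condpr P A (Zis z) = pr P [set t | S (W t)].
  move=> z A S H; rewrite /condpr H setIC /pr (proj2 (IP z S)).
  rewrite fineM ?fin_num_measure //; try exact: mS; try exact: (mZz z).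
  have q0 : fine (P (Zis z)) != 0 by apply: lt0r_neq0; exact: qpos.
  rewrite -/(Zis z); set a := fine (P (Zis z)); set b := fine _.
  by rewrite [a * b]mulrC -mulrA divff // mulr1.
case: hmono => N [mN PN sN].
have NY : forall t, ~ N t -> Y0 t -> Y1 t.
  move=> t Nt y0; case: (boolP (Y1 t)) => // y1; exfalso; apply: Nt; apply: sN => /=.
  by rewrite y0 /= (negbTE y1).
pose Rz (z : bool) (x : T4) := if z then x.1.1.2 else x.1.1.1.
have Ea : forall z, condpr P [set t | Yo t /\ ~~ Ro t] (Zis z) =
    pr P [set t | (fun x => x.1.2 && ~~ Rz z x) (W t)].
  move=> z; apply: (condE z _ (fun x => x.1.2 && ~~ Rz z x)); apply/seteqP; split => t [h1 h2]; split => //;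
  move: h1; rewrite /= /Yo /Ro /obsY /obsR /Rz /W /= h2;
  by case: z {h2}; case: (R0 t); case: (R1 t); case: (Y0 t); case: (Y1 t) => //=; intuition.
have Eb : forall z, condpr P [set t | Yo t] (Zis z) =
    pr P [set t | (fun x => if Rz z x then x.2 else x.1.2) (W t)].
  move=> z; apply: (condE z _ (fun x => if Rz z x then x.2 else x.1.2)); apply/seteqP; split => t [h1 h2]; split => //;
  move: h1; rewrite /= /Yo /Ro /obsY /obsR /Rz /W /= h2;
  by case: z {h2}; case: (R0 t); case: (R1 t); case: (Y0 t); case: (Y1 t) => //=; intuition.
have Ed : forall z, condpr P [set t | ~~ Yo t /\ Ro t] (Zis z) =
    pr P [set t | (fun x => ~~ x.2 && Rz z x) (W t)].
  move=> z; apply: (condE z _ (fun x => ~~ x.2 && Rz z x)); apply/seteqP; split => t [h1 h2]; split => //;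
  move: h1; rewrite /= /Yo /Ro /obsY /obsR /Rz /W /= h2;
  by case: z {h2}; case: (R0 t); case: (R1 t); case: (Y0 t); case: (Y1 t) => //=; intuition.
have Fa : forall z, condpr P [set t | Yo t /\ ~~ Ro t] (Zis z) <= pr P [set t | Y0 t].
  move=> z; rewrite Ea; apply: (@pr_mono _ _ _ P _ _ (mS (fun x => x.1.2 && ~~ Rz z x)) mY0).
  by move=> t /= /andP[].
have Fb : forall z, pr P [set t | Y0 t] <= condpr P [set t | Yo t] (Zis z).
  move=> z; rewrite Eb; apply: (@le_ae _ _ _ P N _ _ mN PN mY0 (mS (fun x => if Rz z x then x.2 else x.1.2))).
  move=> t /= y0 Nt; rewrite /W /=; case: (Rz _ _) => //; exact: NY.
have Fc : forall z, condpr P [set t | Yo t] (Zis z) <= pr P [set t | Y1 t].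
  move=> z; rewrite Eb; apply: (@le_ae _ _ _ P N _ _ mN PN (mS (fun x => if Rz z x then x.2 else x.1.2)) mY1).
  move=> t /=; rewrite /W /=; case: (Rz _ _) => // y0 Nt; exact: NY.
have Fd : forall z, condpr P [set t | ~~ Yo t /\ Ro t] (Zis z) <= 1 - pr P [set t | Y1 t].
  move=> z; rewrite Ed.
  have := @pr_disj d T R P [set t | Y1 t] _ mY1 (mS (fun x => ~~ x.2 && Rz z x)).
  move=> /(_ _) H; suff : pr P [set t | Y1 t] + pr P [set t | (fun x => ~~ x.2 && Rz z x) (W t)] <= 1 by lra.
  apply: H; apply/seteqP; split => t //= [y1 /andP[]]; by rewrite /W /= y1.
split.
- by rewrite ge_max !Fa.
- by rewrite le_min !Fb.
- by rewrite ge_max !Fc.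
- have : Num.max (condpr P [set t | ~~ Yo t /\ Ro t] (Zis false))
                 (condpr P [set t | ~~ Yo t /\ Ro t] (Zis true)) <= 1 - pr P [set t | Y1 t].
    by rewrite ge_max !Fd.
  lra.
Qed.
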